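(* Let $I$ be a linearly ordered set, $(\mathcal{A}_i,\phi_i)_{i\in I}$ noncommutative probability spaces, and let $\psi:\bigsqcup_{i\in I}\mathcal{A}_i\to\mathbb{C}$ be the linear functional on the free product without identification of units such that $\psi|_{\mathcal{A}_i}=\phi_i$ for each $i$, $\psi(a_1a_2\cdots a_n)=0$ whenever $a_k\in\mathcal{A}_{i_k}\cap\mathrm{Ker}\,\phi_{i_k}$ and $i_1\ne i_2\ne\cdots\ne i_n$, and $$\psi(a_1\cdots a_{k-1}1_{i_k}a_{k+1}\cdots a_n)=\begin{cases}\psi(a_1\cdots a_{k-1}a_{k+1}\cdots a_n)&\text{if } i_1<i_2<\cdots<i_k,\\ 0&\text{otherwise,}\end{cases}$$ for $1\le k\le n$, where $a_j\in\mathcal{A}_{i_j}\cap\mathrm{Ker}\,\phi_{i_j}$ for $j<k$, $a_j\in\mathcal{A}_{i_j}$ arbitrary for $j>k$, and $1_{i_k}$ is the unit of $\mathcal{A}_{i_k}$ (the empty word having value $1$). Then $\psi$ agrees with the monotone product of the states $\phi_i$, i.e. $\psi(a_1\cdots a_n)=\phi_{i_k}(a_k)\,\psi(a_1\cdots a_{k-1}a_{k+1}\cdots a_n)$ for all $a_j\in\mathcal{A}_{i_j}$ with neighboring elements from different algebras and $i_{k-1}<i_k>i_{k+1}$ (only one inequality if $k\in\{1,n\}$).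
   Context: A noncommutative probability space $(\mathcal{A},\phi)$ is a unital $*$-algebra with a state. $\bigsqcup_{i\in I}\mathcal{A}_i$ denotes the free product of the algebras $\mathcal{A}_i$ in which the units $1_i$ of the different $\mathcal{A}_i$ are not identified. The monotone product of states $\phi_i$ is the state $\phi$ on $\bigsqcup_i\mathcal{A}_i$ given by $\phi(a_1\cdots a_{k-1}a_ka_{k+1}\cdots a_n)=\phi_{i_k}(a_k)\phi(a_1\cdots a_{k-1}a_{k+1}\cdots a_n)$ for $a_j\in\mathcal{A}_{i_j}$ whenever neighboring variables come from different algebras and $i_{k-1}<i_k>i_{k+1}$ (with only one inequality if $k\in\{1,n\}$). *)

(* Defs.v *)
From HB Require Import structures.
From mathcomp Require Import all_boot all_order all_algebra.
Set Implicit Arguments. Unset Strict Implicit. Unset Printing Implicit Defensive.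
Import Order.TTheory GRing.Theory Num.Theory.
Local Open Scope ring_scope.

Record ncps (C : numClosedFieldType) := NCPS {
  nc_alg :> algType C;
  nc_star : nc_alg -> nc_alg;
  nc_phi : nc_alg -> C;
  nc_starD : forall a b, nc_star (a + b) = nc_star a + nc_star b;
  nc_starZ : forall (c : C) a, nc_star (c *: a) = (c^*) *: nc_star a;
  nc_starM : forall a b, nc_star (a * b) = nc_star b * nc_star a;
  nc_starK : forall a, nc_star (nc_star a) = a;
  nc_phiD : forall a b, nc_phi (a + b) = nc_phi a + nc_phi b;
  nc_phiZ : forall (c : C) a, nc_phi (c *: a) = c * nc_phi a;
  nc_phi1 : nc_phi 1 = 1;
  nc_phi_pos : forall a, 0 <= nc_phi (nc_star a * a)
}.
Arguments nc_star {C} n _.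
Arguments nc_phi {C} n _.

Section FreeProduct.
Variables (C : numClosedFieldType) (d : Order.disp_t) (I : orderType d).
Variable (A : I -> ncps C).

(* A letter of the free product: an element of some A i, tagged by i.
   Words (seq letter) span the free product without identification of units;
   the empty word is its unit. *)
Definition letter := {i : I & A i}.
Definition mkl (i : I) (a : A i) : letter := existT (fun j => A j) i a.

(* psi : words -> C is (the restriction to words of) a linear functional on
   the free product without identification of units: multilinear in each
   letter and compatible with multiplication of adjacent letters from the
   same algebra. *)
Definition fp_functional (psi : seq letter -> C) : Prop :=
  (forall (u v : seq letter) (i : I) (a b : A i) (c : C),
      psi (u ++ mkl (c *: a + b) :: v)
      = c * psi (u ++ mkl a :: v) + psi (u ++ mkl b :: v)) /\
  (forall (u v : seq letter) (i : I) (a b : A i),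
      psi (u ++ mkl a :: mkl b :: v) = psi (u ++ mkl (a * b) :: v)).

Definition alternating (w : seq letter) : bool :=
  sorted (fun x y : letter => tag x != tag y) w.

Definition centered (x : letter) : bool := nc_phi (A (tag x)) (tagged x) == 0.

Definition last_lt (u : seq letter) (i : I) : bool :=
  if rev u is y :: _ then (tag y < i)%O else true.
Definition head_lt (v : seq letter) (i : I) : bool :=
  if v is y :: _ then (tag y < i)%O else true.

End FreeProduct.

(* Main.v *)
Require Import Defs.
From HB Require Import structures.
From mathcomp Require Import all_boot all_order all_algebra.
Import Order.TTheory GRing.Theory Num.Theory.
Local Open Scope ring_scope.

Lemma sorted_rconsP {T : Type} {e : rel T} {s x} : sorted e (rcons s x) -> sorted e s.
Proof. by rewrite -cats1 => /cat_sorted2 []. Qed.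

Lemma sorted_rcons2 {T : Type} {e : rel T} s x y :
  sorted e (rcons (rcons s x) y) = sorted e (rcons s x) && e x y.
Proof.
case: s => [|h t] //=; first by rewrite andbT.
by rewrite rcons_path last_rcons.
Qed.

Lemma sorted_catc {T : Type} {e : rel T} s x t :
  sorted e (s ++ x :: t) = sorted e (rcons s x) && sorted e (x :: t).
Proof. by rewrite sorted_cat_cons. Qed.

Lemma sorted_cons2 {T : Type} {e : rel T} x y t :
  sorted e (x :: y :: t) = e x y && sorted e (y :: t).
Proof. by []. Qed.

Lemma sorted_consP {T : Type} {e : rel T} {x t} : sorted e (x :: t) -> sorted e t.
Proof. exact: path_sorted. Qed.

Section Proof.
Variables (C : numClosedFieldType) (d : Order.disp_t) (I : orderType d).
Variable (A : I -> ncps C).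
Variable (psi : seq (letter A) -> C).
Hypothesis Hf : fp_functional psi.
Hypothesis H0 : psi [::] = 1.
Hypothesis Hz : forall w : seq (letter A),
      w != [::] -> alternating w -> all (@centered _ _ _ A) w -> psi w = 0.
Hypothesis Hu : forall (u v : seq (letter A)) (i : I),
      alternating (u ++ mkl (1 : A i) :: v) -> all (@centered _ _ _ A) u ->
      psi (u ++ mkl (1 : A i) :: v)
      = if sorted (fun x y : I => (x < y)%O) (rcons (map tag u) i)
        then psi (u ++ v) else 0.

Local Notation T := (letter A).
Local Notation tags w := (map (@tag I (fun j => A j)) w).
Local Notation neq := (fun a b : I => a != b).
Local Notation ltI := (fun a b : I => (a < b)%O).

Lemma altE (w : seq T) : alternating w = sorted neq (tags w).
Proof. by rewrite /alternating sorted_map. Qed.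

Lemma last_ltE (u : seq T) i :
  last_lt u i = (if rev (tags u) is k :: _ then (k < i)%O else true).
Proof. by rewrite /last_lt -map_rev; case: (rev u). Qed.

Lemma last_lt_cat (u w : seq T) i : w != [::] -> last_lt (u ++ w) i = last_lt w i.
Proof. by rewrite !last_ltE map_cat rev_cat; case: w => //= y w _; rewrite rev_cons; case: (rev _). Qed.

Definition cen {j} (a : A j) : A j := a - nc_phi (A j) a *: 1.

Lemma cen_centered j (a : A j) : centered (mkl (cen a)).
Proof.
rewrite /centered /= /cen -scaleNr nc_phiD nc_phiZ nc_phi1 mulr1 subrr //.
Qed.

Lemma decomp u v j (a : A j) :
  psi (u ++ mkl a :: v) = nc_phi (A j) a * psi (u ++ mkl (1 : A j) :: v)
                          + psi (u ++ mkl (cen a) :: v).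
Proof.
have {1}-> : a = nc_phi (A j) a *: 1 + cen a by rewrite /cen addrC subrK.
by rewrite Hf.1.
Qed.

Lemma merge1 u v j (a b : A j) : psi (u ++ mkl a :: mkl b :: v) = psi (u ++ mkl (a * b) :: v).
Proof. exact: Hf.2. Qed.


Lemma norm (w : seq T) : exists w' : seq T,
  alternating w' /\ (forall p, psi (p ++ w) = psi (p ++ w')).
Proof.
elim: w => [|y w [w' [Ha Hp]]]; first by exists [::].
case: w' Ha Hp => [|z w1] Ha Hp.
  by exists [:: y]; split => // p; rewrite -cat_rcons Hp cats0 cats1.
case: (eqVneq (tag y) (tag z)) => Hyz.
  move: Ha Hp Hyz; case: y => k yb; case: z => k' zb Ha Hp Hkk; simpl in Hkk; subst k'.
  exists (mkl (yb * zb) :: w1); split.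
    by move: Ha; rewrite !altE.
  by move=> p; rewrite -cat_rcons Hp cat_rcons -merge1.
exists (y :: z :: w1); split.
  by rewrite altE /= Hyz; move: Ha; rewrite altE.
by move=> p; rewrite -cat_rcons Hp cat_rcons.
Qed.

Lemma V0 (v c : seq T) : all (@centered _ _ _ A) c -> ~~ sorted ltI (tags c) ->
  alternating (c ++ v) -> psi (c ++ v) = 0.
Proof.
elim: v c => [|y v IH] c Hc Hs Ha.
  rewrite cats0 in Ha *; apply: Hz => //; by case: c Hs {Hc Ha}.
case: y Ha => j yb Ha.
rewrite decomp Hu.
- case: ifP => [H|_]; first by have := sorted_rconsP H; rewrite (negbTE Hs).
  rewrite mulr0 add0r -cat_rcons IH //.
  + by rewrite all_rcons cen_centered.
  + by rewrite map_rcons; apply: contra Hs => /sorted_rconsP.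
  + by move: Ha; rewrite cat_rcons !altE !map_cat.
- by move: Ha; rewrite !altE !map_cat.
- done.
Qed.

Lemma V1 (c v : seq T) (y : T) : all (@centered _ _ _ A) c ->
  alternating (c ++ y :: v) -> ~~ sorted ltI (rcons (tags c) (tag y)) ->
  psi (c ++ y :: v) = 0.
Proof.
case: y => j yb Hc Ha Hs.
rewrite decomp Hu //; last by move: Ha; rewrite !altE !map_cat.
rewrite (negbTE Hs) mulr0 add0r -cat_rcons V0 //.
- by rewrite all_rcons cen_centered.
- by rewrite map_rcons.
- by move: Ha; rewrite cat_rcons !altE !map_cat.
Qed.


Lemma GU (c w : seq T) (j : I) : all (@centered _ _ _ A) c ->
  alternating (rcons c (mkl (1 : A j))) ->
  psi (c ++ mkl (1 : A j) :: w)
  = if sorted ltI (rcons (tags c) j) then psi (c ++ w) else 0.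
Proof.
move=> Hc Hc1.
have [w' [Ha Hp]] := norm w.
rewrite -cat_rcons Hp cat_rcons (Hp c).
have Hc1' : sorted neq (rcons (tags c) j) by move: Hc1; rewrite altE map_rcons.
case: w' Ha {Hp} => [|y w1] Ha.
  by rewrite Hu // cats1.
case: (eqVneq (tag y) j) => Hyj.
  move: Ha Hyj; case: y => k yb Ha /= Hk; subst k.
  rewrite merge1 mul1r; case: ifP => // HS.
  apply: V1 => //; last by rewrite HS.
  by move: Ha; rewrite !altE map_cat /= sorted_catc Hc1'.
apply: Hu => //.
rewrite altE map_cat /= sorted_catc Hc1' /= eq_sym Hyj /=.
by move: Ha; rewrite altE.
Qed.

Lemma W (c w : seq T) : all (@centered _ _ _ A) c -> ~~ sorted ltI (tags c) ->
  alternating c -> psi (c ++ w) = 0.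
Proof.
move=> Hc Hs Hac.
have [w' [Ha Hp]] := norm w.
rewrite Hp.
case: w' Ha {Hp} => [|y w1] Ha; first by apply: V0 => //; rewrite cats0.
move: Hc Hs Hac; case/lastP: c => [|c0 z] //.
rewrite all_rcons => /andP [Hz0 Hc0] Hs Hac.
case: (eqVneq (tag z) (tag y)) => Hzy.
  move: Ha Hzy Hs Hac Hz0; case: z => k zb; case: y => k' yb Ha Hk; simpl in Hk; subst k'.
  move=> Hs Hac _.
  rewrite -cats1 -catA /= merge1.
  apply: V1 => //; last by move: Hs; rewrite map_rcons.
  by rewrite altE map_cat /= sorted_catc; move: Hac Ha; rewrite !altE map_rcons => -> ->.
apply: V0; first by rewrite all_rcons Hz0.
  by []. rewrite altE map_cat map_rcons /= sorted_catc sorted_rcons2 Hzy.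
by move: Hac Ha; rewrite !altE map_rcons => -> ->.
Qed.

Lemma Zbase (c v : seq T) (x : T) : all (@centered _ _ _ A) c -> centered x ->
  alternating (c ++ x :: v) -> head_lt v (tag x) -> psi (c ++ x :: v) = 0.
Proof.
move=> Hc Hx Ha.
case: v Ha => [|y v] Ha Hh.
  apply: Hz => //; first by case: c {Hc Ha}.
  by rewrite all_cat Hc /= Hx.
rewrite -cat_rcons; apply: V1.
- by rewrite all_rcons Hx.
- by rewrite cat_rcons.
- by rewrite map_rcons sorted_rcons2 /= (lt_gtF Hh) andbF.
Qed.

Lemma last_lt_sorted (c : seq T) i : last_lt c i -> sorted ltI (tags c) ->
  sorted ltI (rcons (tags c) i).
Proof.
case/lastP: c => [|c0 z] //.
rewrite last_ltE !map_rcons rev_rcons sorted_rcons2 => -> ->//.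
Qed.

Lemma Mbase (c v : seq T) i (a : A i) : all (@centered _ _ _ A) c ->
  alternating (c ++ mkl a :: v) -> last_lt c i -> head_lt v i ->
  psi (c ++ mkl a :: v) = nc_phi (A i) a * psi (c ++ v).
Proof.
move=> Hc Ha Hl Hh.
have Hs : sorted neq (rcons (tags c) i).
  by move: Ha; rewrite altE map_cat sorted_catc => /andP [].
rewrite decomp (Zbase _ _ _ Hc (cen_centered i a)) //; last first.
  by move: Ha; rewrite !altE !map_cat.
rewrite addr0 GU //; last by rewrite altE map_rcons.
case: ifP => HS //.
rewrite W ?mulr0 //.
- by apply: contraFN HS; apply: last_lt_sorted.
- by rewrite altE; apply: sorted_rconsP Hs.
Qed.


Lemma alt_drop (c w : seq T) x y : alternating (c ++ x :: y :: w) ->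
  (if rev (tags c) is k :: _ then k != tag y else true) ->
  alternating (c ++ y :: w).
Proof.
case/lastP: c => [|c0 z].
  by rewrite !altE => /sorted_consP.
rewrite map_rcons rev_rcons => Ha Hzy.
move: Ha; rewrite !altE !map_cat !map_rcons /= !sorted_catc !sorted_rcons2.
by case/andP => /andP [-> _] /sorted_consP ->; rewrite Hzy.
Qed.

Lemma LT (c : seq T) j i : sorted ltI (rcons (tags c) j) -> (j < i)%O -> last_lt c i.
Proof.
case/lastP: c => [|c0 z] // + Hj.
rewrite map_rcons sorted_rcons2 => /andP [_ H].
rewrite last_ltE map_rcons rev_rcons; exact: lt_trans H Hj.
Qed.

Lemma M n : forall (r c v : seq T) i (a : A i), (size r <= n)%N ->
  all (@centered _ _ _ A) c -> alternating (c ++ r ++ mkl a :: v) ->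
  last_lt (c ++ r) i -> head_lt v i ->
  psi (c ++ r ++ mkl a :: v) = nc_phi (A i) a * psi (c ++ r ++ v).
Proof.
elim: n => [|n IH] r c v i a.
  case: r => [|//] _ Hc Ha Hl Hh; rewrite cats0 in Hl; exact: Mbase.
case: r => [|x r] Hn Hc Ha Hl Hh; first by rewrite cats0 in Hl; exact: Mbase.
rewrite /= ltnS in Hn.
case: x Ha Hl => j xb Ha Hl.
rewrite !cat_cons (decomp c (r ++ mkl a :: v)) (decomp c (r ++ v)).
have E1 : psi (c ++ mkl (cen xb) :: r ++ mkl a :: v)
          = nc_phi (A i) a * psi (c ++ mkl (cen xb) :: r ++ v).
  rewrite -!(cat_rcons _ c); apply: IH => //.
  - by rewrite all_rcons cen_centered.
  - by rewrite cat_rcons; move: Ha; rewrite !altE !map_cat /= !map_cat.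
  - by rewrite cat_rcons; move: Hl; rewrite !last_ltE !map_cat.
have Hc1 : alternating (rcons c (mkl (1 : A j))).
  by move: Ha; rewrite !altE map_rcons map_cat /= sorted_catc => /andP [].
have E2 : psi (c ++ mkl (1 : A j) :: r ++ mkl a :: v)
          = nc_phi (A i) a * psi (c ++ mkl (1 : A j) :: r ++ v).
  rewrite !GU //; case: ifP => HS; last by rewrite mulr0.
  case: r Hn Ha Hl {E1} => [|y r] Hn Ha Hl.
    have Hj : (j < i)%O by move: Hl; rewrite last_lt_cat.
    have Hci := LT c j i HS Hj.
    rewrite !cat0s; apply: Mbase => //.
    apply: (alt_drop _ _ (existT _ j xb)) => //.
    move: Hci; rewrite last_ltE; case: (rev _) => // k _ Hk.
    by rewrite /= (lt_eqF Hk).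
  have Hl' : last_lt (y :: r) i by move: Hl; rewrite last_lt_cat // -cat1s last_lt_cat.
  clear Hl; move: Hc Ha HS Hc1; case/lastP: c => [|c0 z] Hc Ha HS Hc1.
    by apply: IH => //; apply: (alt_drop _ _ (existT _ j xb)).
  case: (eqVneq (tag z) (tag y)) => Hzy; last first.
    apply: IH => //; last by rewrite last_lt_cat.
    by apply: (alt_drop _ _ (existT _ j xb)) => //; rewrite map_rcons rev_rcons.
  move: Hn Hc Ha Hl' Hzy HS Hc1; case: z => k zb; case: y => k' yb Hn Hc Ha Hl' Hk.
  simpl in Hk; subst k' => HS Hc1.
  rewrite -cats1 -!catA /= !merge1.
  apply: (IH (mkl (zb * yb) :: r) c0) => //.
  - by move: Hc; rewrite all_rcons => /andP [].
  - rewrite altE map_cat /= sorted_catc; move: Ha.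
    rewrite altE map_cat map_rcons /= sorted_catc sorted_rcons2.
    by case/andP => /andP [-> _] /sorted_consP.
  - by rewrite last_lt_cat //; move: Hl'; rewrite !last_ltE.
by rewrite E1 E2 mulrDr mulrCA.
Qed.

End Proof.

Theorem theorem2p3 (C : numClosedFieldType) (d : Order.disp_t) (I : orderType d)
  (A : I -> ncps C) (psi : seq (letter A) -> C) :
  fp_functional psi ->
  psi [::] = 1 ->
  (forall (i : I) (a : A i), psi [:: mkl a] = nc_phi (A i) a) ->
  (forall w : seq (letter A),
      w != [::] -> alternating w -> all (@centered _ _ _ A) w -> psi w = 0) ->
  (forall (u v : seq (letter A)) (i : I),
      alternating (u ++ mkl (1 : A i) :: v) -> all (@centered _ _ _ A) u ->
      psi (u ++ mkl (1 : A i) :: v)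
      = if sorted (fun x y : I => (x < y)%O) (rcons (map tag u) i)
        then psi (u ++ v) else 0) ->
  forall (u v : seq (letter A)) (i : I) (a : A i),
    alternating (u ++ mkl a :: v) -> last_lt u i -> head_lt v i ->
    psi (u ++ mkl a :: v) = nc_phi (A i) a * psi (u ++ v).
Proof.
move=> Hf H0 H1 Hz Hu u v i a Ha Hl Hh.
exact: (@M C d I A psi Hf Hz Hu (size u) u [::] v i a (leqnn _) isT Ha Hl Hh).
Qed.
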